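(* Let $A\in\mathbb{R}^{n\times n}$ and $b\in\mathbb{R}^n$. Suppose that $A$ satisfies either (a) $A-I$ is an $M$-matrix, or (b) $\mathcal{N}(A^\top-I)=\mathrm{span}(v)$ for some vector $v>0$, and $A-I+D$ is an $M$-matrix for every diagonal matrix $D=\mathrm{diag}(d)$ with $d\ge 0$ and $d\neq 0$. If $A$ satisfies (b), assume in addition that $v^\top b<0$. Then the absolute value equation $Ax-|x|-b=0$ has a solution $x\in\mathbb{R}^n$, and this solution is unique.
   Context: For $x\in\mathbb{R}^n$, $|x|=(|x_1|,\dots,|x_n|)^\top$. A matrix is a $Z$-matrix if all its off-diagonal entries are $\le 0$; a $Z$-matrix $A$ is an $M$-matrix if $A$ is nonsingular and $A^{-1}\ge 0$ (entrywise). Vector inequalities are entrywise; $v>0$ means all entries of $v$ are strictly positive. $\mathcal{N}(X)$ denotes the null space of $X$. *)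

(* Defs.v *)
From mathcomp Require Import all_boot all_order all_algebra.
From mathcomp Require Import reals.
Set Implicit Arguments. Unset Strict Implicit. Unset Printing Implicit Defensive.
Import Order.TTheory GRing.Theory Num.Theory.
Local Open Scope ring_scope.

Definition absv (R : realType) (n : nat) (x : 'cV[R]_n) : 'cV[R]_n :=
  \col_i `|x i 0|.

Definition Zmatrix (R : realType) (n : nat) (A : 'M[R]_n) : Prop :=
  forall i j : 'I_n, i != j -> A i j <= 0.

Definition Mmatrix (R : realType) (n : nat) (A : 'M[R]_n) : Prop :=
  [/\ Zmatrix A, A \in unitmx & forall i j : 'I_n, 0 <= invmx A i j].

Definition nullspace_is_span (R : realType) (n : nat) (X : 'M[R]_n)
  (v : 'cV[R]_n) : Prop :=
  forall w : 'cV[R]_n, X *m w = 0 <-> exists c : R, w = c *: v.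

Definition diagv (R : realType) (n : nat) (d : 'cV[R]_n) : 'M[R]_n :=
  diag_mx d^T.

Definition posv (R : realType) (n : nat) (v : 'cV[R]_n) : Prop :=
  forall i, 0 < v i 0.

Definition nonnegv (R : realType) (n : nat) (v : 'cV[R]_n) : Prop :=
  forall i, 0 <= v i 0.

Definition condition_a (R : realType) (n : nat) (A : 'M[R]_n) : Prop :=
  Mmatrix (A - 1%:M).

Definition condition_b (R : realType) (n : nat) (A : 'M[R]_n)
  (v : 'cV[R]_n) : Prop :=
  [/\ nullspace_is_span (A^T - 1%:M) v, posv v &
      forall d : 'cV[R]_n, nonnegv d -> d != 0 ->
        Mmatrix (A - 1%:M + diagv d)].

(* Main.v *)
Require Import Defs.
From mathcomp Require Import all_boot all_order all_algebra.
From mathcomp Require Import reals.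
From mathcomp Require Import lra.
Import Order.TTheory GRing.Theory Num.Theory.
Local Open Scope ring_scope.
Set Implicit Arguments. Unset Strict Implicit.

Section Aux.
Variables (R : realType) (n : nat).
Implicit Types (J B : 'M[R]_n) (w u d : 'cV[R]_n).

Lemma inj_unit J : (forall w, J *m w = 0 -> w = 0) -> J \in unitmx.
Proof.
move=> inj; rewrite -unitmx_tr -row_free_unit -kermx_eq0.
set K := kermx J^T.
have HK : K *m J^T = 0 by apply/eqP; rewrite -sub_kermx submx_refl.
have HK' : J *m K^T = 0 by rewrite -[J]trmxK -trmx_mul HK trmx0.
apply/eqP/matrixP => i j; rewrite mxE.
have := inj (col i K^T); rewrite colE mulmxA HK' mul0mx -colE => /(_ erefl) /matrixP /(_ j 0).
by rewrite !mxE.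
Qed.

Lemma mulDdiag B d w i : ((B + diagv d) *m w) i 0 = (B *m w) i 0 + d i 0 * w i 0.
Proof. by rewrite mulmxDl mxE /diagv mul_diag_mx !mxE. Qed.

Definition monot J := forall w, (forall i, 0 <= (J *m w) i 0) -> forall i, 0 <= w i 0.
Definition good J := J \in unitmx /\ monot J.

Lemma key J u : Zmatrix J -> posv u -> posv (J *m u) -> monot J.
Proof.
move=> ZJ pu pJu w Hw i0.
pose F := fun j : 'I_n => w j 0 / u j 0.
case: (@arg_minP _ _ _ i0 xpredT F isT) => i _ Hmin.
have Ht : forall j, F i * u j 0 <= w j 0.
  move=> j; have := Hmin j isT; rewrite /F => h.
  by rewrite -ler_pdivlMr ?pu.
suff t0 : 0 <= F i.
  have := Ht i0; have := pu i0 => h1 h2.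
  apply: le_trans h2; exact: mulr_ge0 (ltW h1).
rewrite leNgt; apply/negP => tneg.
have : (J *m w) i 0 <= F i * (J *m u) i 0.
  rewrite !mxE mulr_sumr; apply: ler_sum => j _.
  case: (eqVneq i j) => [<-|ij].
    rewrite /F mulrCA mulrC divfK //; have := pu i; lra.
  by rewrite mulrCA; apply: ler_wnM2l; [exact: ZJ|exact: Ht].
have := Hw i; have := pJu i; move: tneg => h1 h2 h3 h4.
have : F i * (J *m u) i 0 < 0 by rewrite pmulr_llt0.
lra.
Qed.

Lemma monot_unit J : monot J -> J \in unitmx.
Proof.
move=> m; apply: inj_unit => w Jw; apply/matrixP => i j.
rewrite (ord1 j) mxE; apply/eqP; rewrite eq_le; apply/andP; split.
  rewrite -oppr_ge0; have := m (- w); rewrite mulmxN Jw oppr0.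
  have h : forall i0 : 'I_n, 0 <= (0 : 'cV[R]_n) i0 0 by move=> ?; rewrite mxE.
  by move=> /(_ h i); rewrite mxE.
by apply: m => k; rewrite Jw mxE.
Qed.

Lemma Mmatrix_good J : Mmatrix J -> good J.
Proof.
case=> _ uJ inv; split => // w Hw i.
rewrite -(mulKmx uJ w) mxE; apply: sumr_ge0 => j _; exact: mulr_ge0.
Qed.


Lemma subE (X Y : 'cV[R]_n) i j : (X - Y) i j = X i j - Y i j.
Proof. by rewrite !mxE. Qed.

Definition gg (t : R) := t - `|t|.

Lemma gg_mono (a c : R) : a <= c -> gg a <= gg c.
Proof.
rewrite /gg => h; case: (lerP 0 a) => ha; [rewrite (ger0_norm ha)|rewrite (ltr0_norm ha)];
case: (lerP 0 c) => hc; [rewrite (ger0_norm hc)|rewrite (ltr0_norm hc)| rewrite (ger0_norm hc)|rewrite (ltr0_norm hc)]; lra.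
Qed.

Definition ind (s : {set 'I_n}) : 'cV[R]_n := \col_i (if i \in s then 2 else 0).
Definition negs (y : 'cV[R]_n) : {set 'I_n} := [set i | y i 0 < 0].

Definition sol B (b x : 'cV[R]_n) := forall i, (B *m x) i 0 + gg (x i 0) = b i 0.

Lemma exist_gen B b (ok : {set 'I_n} -> Prop) :
  (forall s, ok s -> good (B + diagv (ind s))) ->
  ok setT ->
  (forall s y, ok s -> (B + diagv (ind s)) *m y = b -> negs y \proper s -> ok (negs y)) ->
  exists x, sol B b x.
Proof.
move=> Hg Hok Hcl.
suff : forall k (s : {set 'I_n}), (#|s| < k)%N -> ok s -> negs (invmx (B + diagv (ind s)) *m b) \subset s ->
   exists x, sol B b x.
  by move=> /(_ #|[set: 'I_n]|.+1 setT (ltnSn _) Hok (subsetT _)).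
elim=> [//|k IH] s Hk oks Hsub.
have [uJ mJ] := Hg s oks.
set y := invmx _ *m b in Hsub.
have Jy : (B + diagv (ind s)) *m y = b by rewrite mulKVmx.
case: (eqVneq (negs y) s) => [Heq|Hne].
  exists y => i; rewrite -Jy mulDdiag /gg /ind [in ind _ _ _]mxE.
  case: (boolP (i \in s)) => his.
    have : y i 0 < 0 by move: his; rewrite -Heq inE.
    move=> h; rewrite (ltr0_norm h); lra.
  have : 0 <= y i 0 by move: his; rewrite -Heq inE -leNgt.
  move=> h; rewrite (ger0_norm h); lra.
have Hpr : negs y \proper s by rewrite properEneq Hne Hsub.
apply: (IH (negs y)).
- by move: (proper_card Hpr) Hk => h1 h2; apply: leq_trans h1 _.
- exact: Hcl Hpr.
- set s' := negs y.
  have oks' := Hcl s y oks Jy Hpr.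
  have [uJ' mJ'] := Hg s' oks'.
  set y' := invmx _ *m b.
  have Jy' : (B + diagv (ind s')) *m y' = b by rewrite mulKVmx.
  have ge : forall i, 0 <= (y' - y) i 0.
    apply: mJ' => i.
    clearbody y y'.
    rewrite mulmxBr Jy' -{1}Jy.
    have -> : forall (X Y : 'cV[R]_n), (X - Y) i 0 = X i 0 - Y i 0 by move=> X Y; rewrite !mxE.
    rewrite !mulDdiag /ind !mxE.
    case: (boolP (i \in s')) => hi.
      rewrite (subsetP (proper_sub Hpr) _ hi). lra.
    have : 0 <= y i 0 by move: hi; rewrite inE -leNgt.
    move=> h; case: (i \in s); nra.
  apply/subsetP => i; rewrite !inE => hi.
  have := ge i.
  have -> : forall (X Y : 'cV[R]_n), (X - Y) i 0 = X i 0 - Y i 0 by move=> X Y; rewrite !mxE.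
  lra.
Qed.

Definition ee (x y : 'cV[R]_n) : 'cV[R]_n :=
  \col_j (if x j 0 == y j 0 then 1 else (gg (x j 0) - gg (y j 0)) / (x j 0 - y j 0)).

Lemma ee_ge0 x y : nonnegv (ee x y).
Proof.
move=> j; rewrite mxE; case: eqP => // /eqP hne.
case: (ltrgtP (x j 0) (y j 0)) => h.
- have := @gg_mono _ _ (ltW h) => h2; apply: mulr_le0; first lra.
  by rewrite invr_le0; lra.
- have := @gg_mono _ _ (ltW h) => h2; apply: divr_ge0; lra.
- by rewrite h eqxx in hne.
Qed.

Lemma ee_mul x y j : ee x y j 0 * (x j 0 - y j 0) = gg (x j 0) - gg (y j 0).
Proof.
rewrite mxE; case: eqP => [->|/eqP h]; first by rewrite !subrr mulr0.
rewrite divfK //; by rewrite subr_eq0.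
Qed.

Lemma uniq_gen B b x y : sol B b x -> sol B b y -> good (B + diagv (ee x y)) -> x = y.
Proof.
move=> sx sy [uJ _].
have H : (B + diagv (ee x y)) *m (x - y) = 0.
  apply/matrixP => i j; rewrite (ord1 j) mulDdiag mulmxBr.
  rewrite !subE ee_mul [RHS]mxE.
  have := sx i; have := sy i; lra.
apply/eqP; rewrite -subr_eq0; apply/eqP.
by rewrite -(mulKmx uJ (x - y)) H mulmx0.
Qed.


Lemma addE (X Y : 'cV[R]_n) i j : (X + Y) i j = X i j + Y i j.
Proof. by rewrite !mxE. Qed.

Lemma diagE d w i : (diagv d *m w) i 0 = d i 0 * w i 0.
Proof. by rewrite /diagv mul_diag_mx !mxE. Qed.

Lemma absvE (x : 'cV[R]_n) i : absv x i 0 = `|x i 0|.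
Proof. by rewrite mxE. Qed.

Lemma solP A b x : (A *m x - absv x - b = 0) <-> sol (A - 1%:M) b x.
Proof.
have eA : A *m x = (A - 1%:M) *m x + x by rewrite mulmxBl mul1mx subrK.
split.
  move=> /matrixP H i; have := H i 0; rewrite !subE eA addE absvE [RHS]mxE /gg.
  lra.
move=> H; apply/matrixP => i j; rewrite (ord1 j) !subE eA addE absvE [RHS]mxE.
have := H i; rewrite /gg; lra.
Qed.

Lemma Zdiag B d : Zmatrix B -> Zmatrix (B + diagv d).
Proof.
move=> ZB i j ij; rewrite !mxE (negbTE ij) mulr0n addr0; exact: ZB.
Qed.

Lemma ind_ge0 s : nonnegv (ind s).
Proof. by move=> i; rewrite mxE; case: (i \in s). Qed.

End Aux.

Unset Implicit Arguments. Set Strict Implicit.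

Theorem theorem3p2 (R : realType) (n : nat) (A : 'M[R]_n) (b : 'cV[R]_n) :
  (condition_a A \/
   exists v : 'cV[R]_n, condition_b A v /\ (v^T *m b) 0 0 < 0) ->
  exists! x : 'cV[R]_n, A *m x - absv x - b = 0.
Proof.
move=> H; set B := A - 1%:M.
suff [Hex Hun] : (exists x, sol B b x) /\ (forall x y, sol B b x -> sol B b y -> x = y).
  have [x Hx] := Hex; exists x; split; first by apply/solP.
  by move=> y /solP Hy; apply: Hun.
case: H => [[ZB uB invB] | [v [[Hnull Hpos HM] Hvb]]].
  pose u : 'cV[R]_n := invmx B *m const_mx 1.
  have Bu : B *m u = const_mx 1 by rewrite mulKVmx.
  have pu : posv u.
    move=> i; rewrite lt_def; apply/andP; split; last first.
      by rewrite mxE; apply: sumr_ge0 => j _; rewrite mxE mulr1.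
    apply/negP => /eqP ui0.
    have h : forall j, invmx B i j = 0.
      move=> j; move: ui0; rewrite mxE => /eqP.
      rewrite psumr_eq0; last by move=> k _; rewrite mxE mulr1.
      by move=> /allP /(_ j (mem_index_enum _)) /implyP /(_ isT); rewrite mxE mulr1 => /eqP.
    have := mulVmx uB; move=> /matrixP /(_ i i); rewrite !mxE eqxx /=.
    rewrite big1 => [|j _]; last by rewrite h mul0r.
    by move=> /eqP; rewrite eq_sym oner_eq0.
  have goodJ : forall e, nonnegv e -> good (B + diagv e).
    move=> e he.
    have m : monot (B + diagv e).
      apply: (key (u := u)) => //; first exact: Zdiag.
      move=> i; rewrite mulDdiag Bu mxE; have := pu i; have := he i; nra.
    by split => //; apply: monot_unit.
  split.
    apply: (exist_gen (ok := fun _ => True)) => // s _; exact/goodJ/ind_ge0.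
  move=> x y sx sy; apply: (uniq_gen sx sy); exact/goodJ/ee_ge0.
have vB : v^T *m B = 0.
  have : (A^T - 1%:M) *m v = 0 by apply/Hnull; exists 1; rewrite scale1r.
  by rewrite /B => h; rewrite -[v^T *m _]trmxK trmx_mul trmxK linearB /= trmx1 h trmx0.
have goodJ : forall e, nonnegv e -> e != 0 -> good (B + diagv e).
  by move=> e he hne; apply: Mmatrix_good; apply: HM.
split.
  apply: (exist_gen (ok := fun s => s != set0)).
  - move=> s /set0Pn [i hi]; apply: goodJ; first exact: ind_ge0.
    apply/negP => /eqP /matrixP /(_ i 0); rewrite !mxE hi => /eqP; by rewrite pnatr_eq0.
  - apply/negP => /eqP h; move: Hvb; rewrite mxE big1 ?ltxx // => i _.
    by have : i \in [set: 'I_n] by []; rewrite h inE.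
  - move=> s y ns Jy Hpr; apply/negP => /eqP h0.
    have yge : forall i, 0 <= y i 0.
      move=> i; rewrite leNgt; apply/negP => hi.
      have : i \in negs y by rewrite inE.
      by rewrite h0 inE.
    move: Hvb; rewrite -Jy mulmxDl mulmxDr mulmxA vB mul0mx add0r mxE.
    rewrite ltNge => /negP; apply; apply: sumr_ge0 => i _.
    rewrite diagE mxE; apply: mulr_ge0; first exact: ltW (Hpos i).
    apply: mulr_ge0; [exact: ind_ge0 | exact: yge].
move=> x y sx sy; apply: (uniq_gen sx sy); apply: goodJ; first exact: ee_ge0.
have [j xj] : exists j, x j 0 < 0.
  case: (boolP [exists j, x j 0 < 0]) => [/existsP //|/existsPn hall].
  have xge : forall j, 0 <= x j 0 by move=> j; rewrite leNgt; exact: hall.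
  have bE : b = B *m x.
    apply/matrixP => i k; rewrite (ord1 k) -sx /gg (ger0_norm (xge i)) subrr addr0 //.
  by move: Hvb; rewrite bE mulmxA vB mul0mx mxE ltxx.
apply/negP => /eqP /matrixP /(_ j 0); rewrite [RHS]mxE mxE.
case: eqP => [_|/eqP hne]; first by move=> /eqP; rewrite oner_eq0.
move=> /eqP; rewrite mulf_eq0 invr_eq0 !subr_eq0 (negbTE hne) orbF /gg => /eqP.
rewrite (ltr0_norm xj); case: (lerP 0 (y j 0)) => hy; [rewrite (ger0_norm hy)|rewrite (ltr0_norm hy)]; last first.
  move=> h; move/eqP: hne; apply; lra.
lra.
Qed.
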